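(* For every tree $G$ on $n$ vertices there exists a valid search tree $P$ on $G$ which is Steiner-closed and has height at most $2\log_2 n+2$.
   Context: Search tree on a tree: a rooted tree $T$ is a valid search tree on an unrooted tree $G$ if the root $r$ of $T$ is a vertex of $G$ and the subtrees of $T\setminus r$ are valid search trees on the connected components of $G\setminus r$. Height is the maximum number of nodes on a root-to-leaf path. For vertices $a,b$ of $G$, $P(a,b)$ is the vertex set of the path from $a$ to $b$ in $G$. Convex hull: for $S\subseteq V(G)$, $\mathrm{CH}(S)$ is the subgraph of $G$ induced by $\bigcup_{a,b\in S}P(a,b)$. A set $S$ is Steiner-closed (with respect to $G$) if every vertex of $\mathrm{CH}(S)\setminus S$ has degree exactly $2$ in $\mathrm{CH}(S)$. A search tree $T$ of $G$ is Steiner-closed if for every node $v$ of $T$, the set of nodes on the path in $T$ from the root to $v$ is a Steiner-closed set with respect to $G$. *)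

(* Defs.v *)
From Stdlib Require Import Reals.
From HB Require Import structures.
From mathcomp Require Import all_boot.
Set Implicit Arguments. Unset Strict Implicit. Unset Printing Implicit Defensive.

Section Defs.
Variable V : finType.

Definition simple_graph (e : rel V) : Prop :=
  symmetric e /\ irreflexive e.

Definition acyclic (e : rel V) : Prop :=
  forall c : seq V, 3 <= size c -> uniq c -> ~~ cycle e c.

Definition is_tree (e : rel V) : Prop :=
  simple_graph e /\ (forall x y, connect e x y) /\ acyclic e.

Definition induced (e : rel V) (A : {set V}) : rel V :=
  [rel x y | [&& x \in A, y \in A & e x y]].

Definition comp (e : rel V) (A : {set V}) (x : V) : {set V} :=
  [set y in A | connect (induced e A) x y].

Definition components (e : rel V) (A : {set V}) : {set {set V}} :=
  [set comp e A x | x in A].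

Inductive stree : Type := Node of V & list stree.

Fixpoint nodes (t : stree) : {set V} :=
  match t with
  | Node r ch =>
      r |: (fix go (l : list stree) : {set V} :=
              match l with nil => set0 | c :: l' => nodes c :|: go l' end) ch
  end.

(* height = maximum number of nodes on a root-to-leaf path *)
Fixpoint height (t : stree) : nat :=
  match t with
  | Node r ch =>
      ((fix go (l : list stree) : nat :=
         match l with nil => 0 | c :: l' => maxn (height c) (go l') end) ch).+1
  end.

(* valid search tree on G[S] (S the vertex set of a connected subgraph):
   the root r lies in S, and the subtrees of T \ r are valid search trees
   on the connected components of G[S \ r], one subtree per component. *)
Inductive valid_stree (e : rel V) : {set V} -> stree -> Prop :=
| valid_Node (S : {set V}) (r : V) (ch : list stree) :
    r \in S ->
    (forall c, List.In c ch -> valid_stree e (nodes c) c) ->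
    uniq (map nodes ch) ->
    (forall X : {set V}, X \in map nodes ch <-> X \in components e (S :\ r)) ->
    valid_stree e S (Node r ch).

(* x lies on the (unique, G being a tree) path from a to b in G *)
Definition on_path (e : rel V) (a b x : V) : Prop :=
  exists p : seq V, [/\ path e a p, last a p = b, uniq (a :: p) & x \in a :: p].

Definition in_hull (e : rel V) (S : {set V}) (x : V) : Prop :=
  exists a b, [/\ a \in S, b \in S & on_path e a b x].

Definition hull_deg2 (e : rel V) (S : {set V}) (x : V) : Prop :=
  exists y1 y2, [/\ y1 != y2,
                    e x y1 /\ in_hull e S y1,
                    e x y2 /\ in_hull e S y2 &
                    forall y, e x y -> in_hull e S y -> y = y1 \/ y = y2].

Definition steiner_closed (e : rel V) (S : {set V}) : Prop :=
  forall x, in_hull e S x -> x \notin S -> hull_deg2 e S x.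

(* every root-to-node path of the search tree is a Steiner-closed set;
   A is the set of labels of the strict ancestors of the current node *)
Fixpoint stc_from (e : rel V) (A : {set V}) (t : stree) : Prop :=
  match t with
  | Node r ch =>
      steiner_closed e (r |: A) /\
      (fix go (l : list stree) : Prop :=
         match l with nil => True | c :: l' => stc_from e (r |: A) c /\ go l' end) ch
  end.

Definition steiner_closed_stree (e : rel V) (t : stree) : Prop :=
  stc_from e set0 t.

End Defs.

Definition log2R (x : R) : R := Rdiv (ln x) (ln (INR 2)).

(* Main.v *)
Require Import Defs.
From Stdlib Require Import Reals Lra.
From HB Require Import structures.
From mathcomp Require Import all_boot.
From mathcomp Require Import zify.
Set Implicit Arguments. Unset Strict Implicit. Unset Printing Implicit Defensive.

Section Basic.
Variable V : finType.
Variable e : rel V.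
Hypothesis esym : symmetric e.
Hypothesis eirr : irreflexive e.
Hypothesis eacy : acyclic e.

Local Notation ind := (induced e).
Local Notation cmp := (@Defs.comp _ e).
Implicit Types (A B C K S : {set V}) (x y u v w r : V).

Lemma indE A x y : ind A x y = [&& x \in A, y \in A & e x y].
Proof. by []. Qed.

Lemma ind_sym A : symmetric (ind A).
Proof. by move=> x y; rewrite /induced /= esym andbCA. Qed.

Lemma connC A x y : connect (ind A) x y = connect (ind A) y x.
Proof. exact: (sym_connect_sym (ind_sym A)). Qed.

Lemma path_restrict (B : {set V}) u p :
  path e u p -> all (mem B) (u :: p) -> path (ind B) u p.
Proof.
elim: p u => //= v p IH u /andP[euv pv] /and3P[uB vB allp].
by rewrite /= /induced /= uB vB euv /= IH //= vB.
Qed.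

Lemma ind_sub A : subrel (ind A) e.
Proof. by move=> x y /and3P[]. Qed.

Lemma connect_mono (A B : {set V}) x y :
  A \subset B -> connect (ind A) x y -> connect (ind B) x y.
Proof.
move=> /subsetP AB; apply: connect_sub => u v /and3P[uA vA euv].
by apply: connect1; rewrite indE AB // AB // euv.
Qed.

Lemma conn_memL A x y : connect (ind A) x y -> x != y -> x \in A.
Proof.
case/connectP=> [[|z p]] /=; first by move=> _ ->; rewrite eqxx.
by case/andP=> /and3P[].
Qed.

Lemma conn_memR A x y : connect (ind A) x y -> x != y -> y \in A.
Proof. by rewrite connC eq_sym; apply: conn_memL. Qed.

Lemma in_comp A x y : (y \in cmp A x) = (y \in A) && connect (ind A) x y.
Proof. by rewrite inE. Qed.

Lemma comp_sub A x : cmp A x \subset A.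
Proof. by apply/subsetP=> y; rewrite in_comp => /andP[]. Qed.

Lemma comp_id A x : x \in A -> x \in cmp A x.
Proof. by move=> xA; rewrite in_comp xA connect0. Qed.

Lemma comp_memx A x y : y \in cmp A x -> x \in A.
Proof.
rewrite in_comp => /andP[yA c]; have [->//|ne] := eqVneq x y.
exact: conn_memL c ne.
Qed.

Lemma comp_eq A x y : y \in cmp A x -> cmp A y = cmp A x.
Proof.
rewrite in_comp => /andP[yA cxy]; apply/setP=> z; rewrite !in_comp.
case: (z \in A) => //=; apply/idP/idP => [cyz|cxz].
  exact: connect_trans cxy cyz.
by apply: connect_trans cxz; rewrite connC.
Qed.

Lemma comp_sym A x y : y \in cmp A x -> x \in cmp A y.
Proof. by move=> h; rewrite (comp_eq h) comp_id // (comp_memx h). Qed.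

Lemma comp_edge A x u v : u \in cmp A x -> v \in A -> e u v -> v \in cmp A x.
Proof.
rewrite !in_comp => /andP[uA cxu] vA euv; rewrite vA /=.
by apply: connect_trans cxu (connect1 _); rewrite indE uA vA.
Qed.

Lemma connect_restrict (A B : {set V}) x y :
  connect (ind A) x y -> cmp A x \subset B -> connect (ind B) x y.
Proof.
move=> cxy /subsetP sB; have [->|ne] := eqVneq x y; first exact: connect0.
have xA := conn_memL cxy ne.
case/connectP: cxy => p pth ->; apply/connectP; exists p => //.
apply: path_restrict; first exact: sub_path (@ind_sub A) _ _ pth.
apply/allP=> z zp; apply: sB; rewrite in_comp (path_connect pth zp) andbT.
have [<-//|nz] := eqVneq x z.
by apply: (conn_memR (path_connect pth zp)).
Qed.

Lemma comp_restrict A x r : r \notin cmp A x -> cmp A x = cmp (A :\ r) x.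
Proof.
move=> rn; apply/setP=> y; apply/idP/idP => [yc|].
  have yA: y \in A :\ r.
    by rewrite in_setD1 (subsetP (comp_sub _ _) _ yc) andbT; apply: contraNneq rn => <-.
  rewrite in_comp yA; apply: connect_restrict (_ : connect (ind A) x y) _.
    by move: yc; rewrite in_comp => /andP[].
  apply/subsetP=> z zc; rewrite in_setD1 (subsetP (comp_sub _ _) _ zc) andbT.
  by apply: contraNneq rn => <-.
rewrite !in_comp => /andP[]; rewrite in_setD1 => /andP[_ ->] /=.
by apply: connect_mono; apply/subsetP=> z; rewrite in_setD1 => /andP[].
Qed.

Definition conn (C : {set V}) :=
  forall u v, u \in C -> v \in C -> connect (ind C) u v.

Lemma comp_conn A x : conn (cmp A x).
Proof.
move=> u v uc vc; have: connect (ind A) u v.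
  move: uc vc; rewrite !in_comp => /andP[_ cu] /andP[_ cv].
  by apply: connect_trans cv; rewrite connC.
by move/connect_restrict; apply; rewrite (comp_eq uc).
Qed.

Lemma path_ind_mem A u p : path (ind A) u p -> all (mem A) p.
Proof.
by elim: p u => //= v p IH u /andP[/and3P[_ vA _] /IH]; rewrite vA.
Qed.

Lemma no_two_nbrs A r u v :
  r \notin A -> e r u -> e r v -> u != v -> ~~ connect (ind A) u v.
Proof.
move=> rA eru erv neq; apply/negP; case/connectP=> p pth vl.
case: (shortenP pth) vl => p' pth' up' _ vl.
case: p' pth' up' vl => [|w p'] pth' up' vl; first by rewrite /= vl eqxx in neq.
have uA: u \in A by move: pth' => /= /andP[/and3P[]].
have allA := path_ind_mem pth'.
have: ~~ cycle e [:: r, u, w & p'].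
  apply: eacy => //=.
  rewrite /= in up' *; rewrite up' andbT inE negb_or.
  apply/andP; split; first by apply: contraNneq rA => ->.
  by apply: contra rA => h; apply: (allP allA).
rewrite /= eru /=.
move/negP; apply; move: (sub_path (@ind_sub A) pth') => /= /andP[-> h]; rewrite rcons_path h /=; move: vl => /= <-; by rewrite esym.
Qed.

Lemma first_step A x y : connect (ind A) x y -> x != y ->
  exists w, [/\ e x w, w \in A & connect (ind (A :\ x)) w y].
Proof.
case/connectP=> p pth yl ne.
case: (shortenP pth) yl => p' pth' up' _ yl.
case: p' pth' up' yl => [|w p'] pth' up' yl; first by rewrite yl eqxx in ne.
move: pth' => /= /andP[/and3P[xA wA exw] pth'].
exists w; split => //; apply/connectP; exists p' => //.
apply: path_restrict; first exact: sub_path (@ind_sub A) _ _ pth'.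
apply/allP=> z zin; change (z \in A :\ x); rewrite in_setD1.
have zA: z \in A by move: zin; rewrite inE => /orP[/eqP->//|]; exact: (allP (path_ind_mem pth') z).
rewrite zA andbT; apply: contraNneq (_ : x \notin w :: p') => [<- //|].
by move: up'; rewrite /= => /andP[].
Qed.

Lemma comp_has_nbr C r y : conn C -> r \in C -> y \in C :\ r ->
  exists2 w, w \in cmp (C :\ r) y & e r w.
Proof.
move=> cC rC yC; have ry : r != y by move: yC; rewrite in_setD1 eq_sym => /andP[].
have [w [erw wC cw]] := first_step (cC _ _ rC (subsetP (subsetDl _ _) _ yC)) ry.
exists w => //; rewrite in_comp connC cw andbT in_setD1 wC andbT.
by apply: contraTneq erw => ->; rewrite eirr.
Qed.

Lemma move_in C r K k0 r' y : conn C -> r \in C -> K = cmp (C :\ r) k0 ->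
  r' \in K -> e r r' -> y \in C :\ r' -> r \notin cmp (C :\ r') y ->
  cmp (C :\ r') y \subset K :\ r'.
Proof.
move=> cC rC defK r'K err' yC rn.
have r'C : r' \in C by move: r'K; rewrite defK => /(subsetP (comp_sub _ _)); rewrite in_setD1 => /andP[].
have ne : r' != y by move: yC; rewrite in_setD1 eq_sym => /andP[].
have [w [er'w wC cw]] := first_step (cC _ _ r'C (subsetP (subsetDl _ _) _ yC)) ne.
have wc : w \in cmp (C :\ r') y.
  rewrite in_comp connC cw andbT in_setD1 wC andbT.
  by apply: contraTneq er'w => ->; rewrite eirr.
have wr : w != r by apply: contraNneq rn => <-.
have wK : w \in K.
  rewrite defK; apply: comp_edge (_ : r' \in _) _ er'w; first by rewrite -defK.
  by rewrite in_setD1 wr.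
apply/subsetP=> z zc; rewrite in_setD1.
have zr' : z != r'.
  by move: (subsetP (comp_sub _ _) _ zc); rewrite in_setD1 => /andP[].
rewrite zr' /=.
have rn' : r \notin cmp (C :\ r') w by rewrite (comp_eq wc).
have cwz : connect (ind (C :\ r')) w z.
  by move: zc; rewrite -(comp_eq wc) in_comp => /andP[].
have h := comp_restrict rn'.
have: z \in cmp (C :\ r' :\ r) w by rewrite -h (comp_eq wc).
rewrite in_comp => /andP[zC czw].
have zCr : z \in C :\ r by move: zC; rewrite !in_setD1 => /and3P[-> _ ->].
have wK0 : w \in cmp (C :\ r) k0 by rewrite -defK.
rewrite defK -(comp_eq wK0) in_comp zCr /=.
apply: connect_mono czw; apply/subsetP => t; rewrite !in_setD1 => /and3P[-> _ ->].
by [].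
Qed.

Lemma move_out C r K k0 r' y k : conn C -> r \in C -> K = cmp (C :\ r) k0 ->
  r' \in K -> e r r' -> r \in cmp (C :\ r') y -> k \in cmp (C :\ r') y -> k \in K -> False.
Proof.
move=> cC rC defK r'K err' rc kc kK.
have kr : r != k.
  by apply: contraTneq kK => <-; rewrite defK; apply/negP => /(subsetP (comp_sub _ _)); rewrite in_setD1 eqxx.
have crk : connect (ind (C :\ r')) r k.
  by move: kc; rewrite -(comp_eq rc) in_comp => /andP[].
have [w [erw wC cw]] := first_step crk kr.
have cw' : connect (ind (C :\ r)) w k.
  by apply: connect_mono cw; apply/subsetP => t; rewrite !in_setD1 => /and3P[-> _ ->].
have wCr : w \in C :\ r.
  rewrite in_setD1 (subsetP (subsetDl _ _) _ wC) andbT.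
  by apply: contraTneq erw => ->; rewrite eirr.
have wK : w \in K by rewrite defK -(comp_eq (_ : k \in _)) -?defK // in_comp wCr connC cw'.
have wr' : w != r' by move: wC; rewrite in_setD1 => /andP[].
have : connect (ind (C :\ r)) r' w.
  move: r'K wK; rewrite defK !in_comp => /andP[_ c1] /andP[_ c2].
  by apply: connect_trans c2; rewrite connC.
apply/negP; apply: (@no_two_nbrs _ r) => //; first by rewrite in_setD1 eqxx.
by rewrite eq_sym.
Qed.


Lemma componentsP A K : K \in components e A -> exists2 x, x \in A & K = cmp A x.
Proof. by case/imsetP=> x xA ->; exists x. Qed.

Lemma comp_components A x : x \in A -> cmp A x \in components e A.
Proof. by move=> xA; apply: imset_f. Qed.

Definition M C r := \max_(K in components e (C :\ r)) #|K|.

Lemma heavy_move C r K r' : conn C -> r \in C -> K \in components e (C :\ r) ->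
  #|C| < (#|K|).*2 -> r' \in K -> e r r' -> M C r' < #|K|.
Proof.
move=> cC rC /componentsP[k0 k0C defK] hv r'K err'.
have K0 : 0 < #|K| by apply/card_gt0P; exists r'.
rewrite -(prednK K0) ltnS; apply/bigmax_leqP => K' /componentsP[y yC defK'].
rewrite -ltnS (prednK K0).
have KC : K \subset C by rewrite defK; apply: subset_trans (comp_sub _ _) (subsetDl _ _).
case rK' : (r \in K').
  have dis : K' :&: K = set0.
    apply/setP=> k; rewrite inE in_set0; apply/negP => /andP[kK' kK].
    by rewrite defK' in rK' kK'; exact: (move_out cC rC defK r'K err' rK' kK' kK).
  have : #|K' :|: K| <= #|C|.
    apply: subset_leq_card; rewrite subUset KC andbT defK'.
    by apply: subset_trans (comp_sub _ _) (subsetDl _ _).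
  rewrite cardsU dis cards0 subn0 => h.
  move: hv; rewrite -addnn; move: h; clear; lia.
have := move_in cC rC defK r'K err' yC; rewrite -defK' rK' => /(_ isT) /subset_leq_card.
by rewrite (cardsD1 r' K) r'K add1n ltnS.
Qed.

Lemma exists_argmin (T : finType) (P : pred T) (F : T -> nat) (x0 : T) :
  P x0 -> exists x : T, P x /\ forall y : T, P y -> F x <= F y.
Proof. by move=> Px0; case: (arg_minnP F Px0) => x Px mn; exists x. Qed.

Lemma M_ge C r K : K \in components e (C :\ r) -> #|K| <= M C r.
Proof. by move=> KC; apply: (leq_bigmax_cond (F := fun K => #|K|)) KC. Qed.

Lemma centroid C c0 : conn C -> c0 \in C ->
  exists2 r, r \in C & forall K, K \in components e (C :\ r) -> (#|K|).*2 <= #|C|.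
Proof.
move=> cC c0C; have [r [rC mn]] := exists_argmin (M C) c0C.
exists r => // K KC; rewrite leqNgt; apply/negP => hv.
case/componentsP: (KC) => y yC defK.
have [r' r'K err'] := comp_has_nbr cC rC yC; rewrite -defK in r'K.
have r'C : r' \in C.
  by move: r'K; rewrite defK => /(subsetP (comp_sub _ _)); rewrite in_setD1 => /andP[].
have := heavy_move cC rC KC hv r'K err'.
by rewrite ltnNge (leq_trans (M_ge KC) (mn _ r'C)).
Qed.

Lemma sep_move C r K r' a b : conn C -> r \in C -> K \in components e (C :\ r) ->
  r' \in K -> e r r' -> a \in K -> a \notin cmp (C :\ r) b -> a \notin cmp (C :\ r') b.
Proof.
move=> cC rC /componentsP[k0 k0C defK] r'K err' aK sep; apply/negP => aK'.
have bC := comp_memx aK'.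
case rK' : (r \in cmp (C :\ r') b).
  exact: (move_out cC rC defK r'K err' rK' aK' aK).
have := move_in cC rC defK r'K err' bC; rewrite rK' => /(_ isT) /subsetP sub.
have : b \in K :\ r' by apply: sub; apply: comp_id.
rewrite in_setD1 => /andP[_ bK].
move: bK; rewrite defK => bK; rewrite (comp_eq bK) in sep.
by rewrite -defK aK in sep.
Qed.

Lemma sepC A a b : (a \notin cmp A b) = (b \notin cmp A a).
Proof. by apply/negb_inj; rewrite !negbK; apply/idP/idP => /comp_sym. Qed.

Lemma median C a b : conn C -> a \in C -> b \in C ->
  exists2 r, r \in C & forall K, K \in components e (C :\ r) ->
    ~~ ((a \in K) && (b \in K)) /\ ((#|K|).*2 <= #|C| \/ (a \notin K /\ b \notin K)).
Proof.
move=> cC aC bC.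
pose Sep r := (r \in C) && (a \notin cmp (C :\ r) b).
have Sa : Sep a.
  by rewrite /Sep aC /=; apply/negP => /(subsetP (comp_sub _ _)); rewrite in_setD1 eqxx.
have [r [/andP[rC sr] mn]] := exists_argmin (M C) Sa.
exists r => // K KC; case/componentsP: (KC) => y yC defK.
have notboth : ~~ ((a \in K) && (b \in K)).
  apply/negP => /andP[aK bK]; move: bK; rewrite defK => bK.
  by rewrite (comp_eq bK) -defK aK in sr.
split => //.
have [small|hv] := leqP ((#|K|).*2) #|C|; [by left|right].
have [r' r'K err'] := comp_has_nbr cC rC yC; rewrite -defK in r'K.
have r'C : r' \in C.
  by move: r'K; rewrite defK => /(subsetP (comp_sub _ _)); rewrite in_setD1 => /andP[].
have lt := heavy_move cC rC KC hv r'K err'.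
split; apply/negP => xK.
  have : Sep r' by rewrite /Sep r'C; apply: (sep_move cC rC KC r'K err' xK sr).
  by move/mn; rewrite leqNgt (leq_trans _ (M_ge KC)).
have : Sep r'.
  rewrite /Sep r'C sepC; apply: (sep_move cC rC KC r'K err' xK).
  by rewrite -sepC.
by move/mn; rewrite leqNgt (leq_trans _ (M_ge KC)).
Qed.


Definition bnd A K := [set s in A | [exists k in K, e k s]].
Definition good A := forall x, x \notin A -> #|bnd A (cmp (~: A) x)| <= 2.

Lemma path_avoid x u p : path e u p -> x \notin u :: p -> connect (ind (~: [set x])) u (last u p).
Proof.
move=> pth xn; apply/connectP; exists p => //; apply: path_restrict => //.
apply/allP => z zin; change (z \in ~: [set x]); rewrite in_setC1.
by apply: contraNneq xn => <-.
Qed.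

Lemma hull_side a b p y x : path e a p -> last a p = b -> uniq (a :: p) ->
  y \in a :: p -> x != y ->
  exists2 s, (s == a) || (s == b) & connect (ind (~: [set x])) y s.
Proof.
move=> pth lb up; rewrite inE => /orP[/eqP->|yp] xy.
  by exists a; rewrite ?eqxx ?connect0.
case/splitPr: yp pth lb up => p1 p2 pth lb up.
move: pth; rewrite cat_path => /andP[pth1 pth2].
rewrite last_cat /= in lb.
case xin : (x \in a :: p1).
  exists b; first by rewrite eqxx orbT.
  rewrite -lb; apply: path_avoid; first by move: pth2 => /= /andP[].
  apply: contraTN xin => xin.
  by move: up; rewrite -cat_cons cat_uniq => /and3P[_ /hasPn /(_ x xin) ->].
exists a; first by rewrite eqxx.
rewrite connC.
have : path e a (rcons p1 y) by rewrite rcons_path pth1; move: pth2 => /= /andP[].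
move/path_avoid; rewrite last_rcons; apply.
by rewrite -rcons_cons mem_rcons inE negb_or xy xin.
Qed.

Lemma first_S S x y s : x \notin S -> e x y -> s \in S ->
  connect (ind (~: [set x])) y s ->
  exists2 s', s' \in bnd S (cmp (~: S) x) & connect (ind (~: [set x])) y s'.
Proof.
move=> xS exy sS cys.
have xK : x \in cmp (~: S) x by apply: comp_id; rewrite in_setC.
case yS : (y \in S).
  exists y; last exact: connect0.
  by rewrite inE yS /=; apply/existsP; exists x; rewrite xK exy.
have yK : y \in cmp (~: S) x by apply: comp_edge xK _ exy; rewrite in_setC yS.
case/connectP: cys => p pth sl.
elim: p y yS yK pth sl {exy} => [|v p IH] u uS uK /=; first by move=> _ su; by rewrite su uS in sS.
case/andP=> euv pth sl.
have euv' : e u v by move: euv => /and3P[].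
case vS : (v \in S).
  exists v; last exact: connect1.
  by rewrite inE vS /=; apply/existsP; exists u; rewrite uK euv'.
have vK : v \in cmp (~: S) x by apply: comp_edge uK _ euv'; rewrite in_setC vS.
have [s' s'b cvs] := IH v vS vK pth sl.
by exists s' => //; apply: connect_trans (connect1 euv) cvs.
Qed.

Lemma hull_bnd S x z : in_hull e S z -> e x z -> x \notin S ->
  exists2 s, s \in bnd S (cmp (~: S) x) & connect (ind (~: [set x])) z s.
Proof.
case=> a [b [aS bS [p [pth lb up zin]]]] exz xS.
have xz : x != z by apply: contraTneq exz => ->; rewrite eirr.
have [s sab czs] := hull_side pth lb up zin xz.
have sS : s \in S by case/orP: sab => /eqP->.
exact: first_S xS exz sS czs.
Qed.

Lemma good_steiner S : good S -> steiner_closed e S.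
Proof.
move=> gS x hx xS.
case: (hx) => a [b [aS bS [p [pth lb up xin]]]].
have xa : x != a by apply: contraNneq xS => ->.
move: xin; rewrite inE (negbTE xa) /= => xp.
case/splitPr: xp pth lb up => p1 p2 pth lb up.
case: p2 pth lb up => [|y2 p2] pth lb up.
  by rewrite last_cat /= in lb; rewrite lb bS in xS.
move: (pth); rewrite cat_path => /andP[_ /= /and3P[ey1x exy2 _]].
set y1 := last a p1 in ey1x.
have y1in : y1 \in a :: p1 by apply: mem_last.
have hull1 : in_hull e S y1.
  by exists a, b; split => //; exists (p1 ++ [:: x, y2 & p2]); split => //; rewrite -cat_cons mem_cat y1in.
have hull2 : in_hull e S y2.
  exists a, b; split => //; exists (p1 ++ [:: x, y2 & p2]); split => //.
  by rewrite -cat_cons mem_cat !inE eqxx !orbT.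
move: up; rewrite -cat_cons cat_uniq => /and3P[_ hn _].
have y1y2 : y1 != y2.
  have y2in : y2 \in [:: x, y2 & p2] by rewrite !inE eqxx orbT.
  apply/negP => /eqP e12; have := hasPn hn y2 y2in; by rewrite -e12 y1in.
exists y1, y2; split => //; first by split => //; rewrite esym.
move=> y exy hy.
case: (eqVneq y y1) => [->|ny1]; first by left.
case: (eqVneq y y2) => [->|ny2]; first by right.
exfalso.
have xSc : x \notin [set x] :\ x by rewrite in_setD1 eqxx.
have ex1 : e x y1 by rewrite esym.
have [s1 b1 c1] := hull_bnd hull1 ex1 xS.
have [s2 b2 c2] := hull_bnd hull2 exy2 xS.
have [s3 b3 c3] := hull_bnd hy exy xS.
have nx : x \notin ~: [set x] by rewrite in_setC1 eqxx.
have dist z1 z2 t1 t2 : e x z1 -> e x z2 -> z1 != z2 ->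
    connect (ind (~: [set x])) z1 t1 -> connect (ind (~: [set x])) z2 t2 -> t1 != t2.
  move=> e1 e2 nz ct1 ct2; apply: contraNneq (no_two_nbrs nx e1 e2 nz) => tt.
  by apply: connect_trans ct1 _; rewrite tt connC.
have d12 : s1 != s2 by apply: (dist y1 y2) => //; rewrite esym.
have d13 : s1 != s3 by apply: (dist y1 y) => //; rewrite ?esym // eq_sym.
have d23 : s2 != s3 by apply: (dist y2 y) => //; rewrite eq_sym.
have : #|[set s1; s2; s3]| <= 2.
  apply: leq_trans (gS x xS); apply: subset_leq_card.
  by apply/subsetP => t; rewrite !inE => /orP[/orP[]|] /eqP->; [move: b1|move: b2|move: b3]; rewrite inE.
by rewrite setUC cardsU1 cards2 d12 !inE negb_or eq_sym d13 eq_sym d23.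
Qed.

Lemma good0 : good set0.
Proof.
move=> x _; rewrite (_ : bnd _ _ = set0) ?cards0 //.
by apply/setP => s; rewrite !inE.
Qed.

Lemma setC_U1 r A : ~: (r |: A) = (~: A) :\ r.
Proof. by apply/setP => z; rewrite !inE negb_or andbC. Qed.

Lemma comp_child A x0 r y : r \in cmp (~: A) x0 -> y \in cmp (~: A) x0 :\ r ->
  cmp (~: (r |: A)) y = cmp (cmp (~: A) x0 :\ r) y.
Proof.
set D := ~: A; set C := cmp D x0 => rC yC.
have yC' : y \in C by move: yC; rewrite in_setD1 => /andP[].
have sub : cmp (D :\ r) y \subset C :\ r.
  apply/subsetP => t; rewrite in_comp => /andP[tD cyt].
  rewrite in_setD1; move: (tD); rewrite in_setD1 => /andP[-> tD'] /=.
  rewrite /C -(comp_eq yC') in_comp tD' /=.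
  by apply: connect_mono cyt; apply: subsetDl.
rewrite setC_U1; apply/setP => z; apply/idP/idP => zc.
  have zC := subsetP sub _ zc.
  rewrite in_comp zC /=; apply: connect_restrict sub.
  by move: zc; rewrite in_comp => /andP[].
move: zc; rewrite !in_comp => /andP[zC c]; apply/andP; split.
  by move: zC; rewrite !in_setD1 => /andP[-> /(subsetP (comp_sub _ _))].
apply: connect_mono c; apply/subsetP => t; rewrite !in_setD1 => /andP[-> /(subsetP (comp_sub _ _))].
by [].
Qed.

Lemma good_step A x0 r : good A -> r \in cmp (~: A) x0 ->
  (forall y, y \in cmp (~: A) x0 :\ r -> #|bnd (r |: A) (cmp (cmp (~: A) x0 :\ r) y)| <= 2) ->
  good (r |: A).
Proof.
set D := ~: A; set C := cmp D x0 => gA rC hC x.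
rewrite in_setU1 negb_or => /andP[xr xA].
case xC : (x \in C).
  by rewrite (comp_child rC) ?hC // in_setD1 xr xC.
have xD : x \in D by rewrite in_setC.
have rn : r \notin cmp D x.
  apply/negP => rx; rewrite /C -(comp_eq rC) (comp_eq rx) comp_id // in xC.
rewrite setC_U1 -(comp_restrict rn).
apply: leq_trans (gA x xA); apply: subset_leq_card; apply/subsetP => s.
rewrite !inE => /andP[/orP[/eqP->|sA] /existsP[k /andP[kc eks]]].
  exfalso; move/negP: rn; apply; apply: comp_edge kc _ eks.
  exact: (subsetP (comp_sub _ _) _ rC).
by rewrite sA /=; apply/existsP; exists k; rewrite kc.
Qed.

Lemma bnd_child A x0 r y s : y \in cmp (~: A) x0 :\ r ->
  s \in bnd (r |: A) (cmp (cmp (~: A) x0 :\ r) y) -> s != r ->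
  s \in bnd A (cmp (~: A) x0) /\ exists2 k, k \in cmp (cmp (~: A) x0 :\ r) y & e k s.
Proof.
move=> yC; rewrite !inE => /andP[/orP[/eqP->|sA] /existsP[k /andP[kc eks]]]; first by rewrite eqxx.
move=> _; split; last by exists k.
rewrite sA /=; apply/existsP; exists k; rewrite eks andbT.
by move: (subsetP (comp_sub _ _) _ kc); rewrite in_setD1 => /andP[].
Qed.

Lemma attach_unique A x0 s a k : s \in A -> a \in cmp (~: A) x0 -> k \in cmp (~: A) x0 ->
  e a s -> e k s -> k = a.
Proof.
move=> sA aC kC eas eks; apply/eqP/negPn/negP => ne.
have sC : s \notin cmp (~: A) x0.
  by apply/negP => /(subsetP (comp_sub _ _)); rewrite in_setC sA.
have := no_two_nbrs sC (_ : e s k) (_ : e s a) ne; rewrite !(esym s) => /(_ eks eas).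
by rewrite (comp_conn kC aC).
Qed.

Lemma choose_root A x0 : x0 \notin A -> #|bnd A (cmp (~: A) x0)| <= 2 ->
  exists2 r, r \in cmp (~: A) x0 & forall y, y \in cmp (~: A) x0 :\ r ->
    #|bnd (r |: A) (cmp (cmp (~: A) x0 :\ r) y)| <= 2 /\
    ((#|cmp (cmp (~: A) x0 :\ r) y|).*2 <= #|cmp (~: A) x0| \/
     (#|bnd (r |: A) (cmp (cmp (~: A) x0 :\ r) y)| <= 1 /\ 2 <= #|bnd A (cmp (~: A) x0)|)).
Proof.
set D := ~: A; set C := cmp D x0 => x0A hb.
have x0C : x0 \in C by apply: comp_id; rewrite in_setC.
have cC : conn C := @comp_conn D x0.
have [small|two] := leqP #|bnd A C| 1.
  have [r rC hr] := centroid cC x0C.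
  exists r => // y yC; split; last by left; apply: hr; apply: comp_components.
  apply: leq_trans (_ : #|r |: bnd A C| <= 2).
    apply: subset_leq_card; apply/subsetP => s sb; rewrite in_setU1.
    case: eqVneq => //= sr.
    by case: (bnd_child yC sb sr).
  by rewrite cardsU1; move: small; case: (r \in bnd A C); clear; lia.
have /cards2P [s1 [s2 [s12 defB]]] : #|bnd A C| == 2 by rewrite eqn_leq hb two.
have s1B : s1 \in bnd A C by rewrite defB !inE eqxx.
have s2B : s2 \in bnd A C by rewrite defB !inE eqxx orbT.
move: (s1B) (s2B); rewrite !inE => /andP[s1A /existsP[a /andP[aC eas1]]] /andP[s2A /existsP[b /andP[bC ebs2]]].
have [r rC hr] := median cC aC bC.
exists r => // y yC.
have KC := comp_components yC.
have [nb hv] := hr _ KC.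
set K := cmp (C :\ r) y in nb hv *.
have adj1 s : s \in bnd (r |: A) K -> s != r -> s = s1 -> a \in K.
  move=> sb sr ss; have [_ [k kK eks]] := bnd_child yC sb sr.
  have kC : k \in C by move: (subsetP (comp_sub _ _) _ kK); rewrite in_setD1 => /andP[].
  rewrite ss in eks; by rewrite -(attach_unique s1A aC kC eas1 eks).
have adj2 s : s \in bnd (r |: A) K -> s != r -> s = s2 -> b \in K.
  move=> sb sr ss; have [_ [k kK eks]] := bnd_child yC sb sr.
  have kC : k \in C by move: (subsetP (comp_sub _ _) _ kK); rewrite in_setD1 => /andP[].
  rewrite ss in eks; by rewrite -(attach_unique s2A bC kC ebs2 eks).
have inB s : s \in bnd (r |: A) K -> s != r -> s = s1 \/ s = s2.
  move=> sb sr; have [sB _] := bnd_child yC sb sr.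
  by move: sB; rewrite defB !inE => /orP[] /eqP; [left|right].
split.
  case/nandP: nb => [an|bn].
    apply: leq_trans (_ : #|[set r; s2]| <= 2); last by rewrite cards2; case: (r != s2).
    apply: subset_leq_card; apply/subsetP => s sb; rewrite !inE.
    case: eqVneq => //= sr; case: (inB s sb sr) => ss; last by rewrite ss eqxx.
    by rewrite (adj1 s sb sr ss) in an.
  apply: leq_trans (_ : #|[set r; s1]| <= 2); last by rewrite cards2; case: (r != s1).
  apply: subset_leq_card; apply/subsetP => s sb; rewrite !inE.
  case: eqVneq => //= sr; case: (inB s sb sr) => ss; first by rewrite ss eqxx.
  by rewrite (adj2 s sb sr ss) in bn.
case: hv => [sm|[an bn]]; [by left|right]; split; last by [].
apply: leq_trans (_ : #|[set r]| <= 1); last by rewrite cards1.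
apply: subset_leq_card; apply/subsetP => s sb; rewrite !inE.
case: eqVneq => //= sr; case: (inB s sb sr) => ss.
  by rewrite (adj1 s sb sr ss) in an.
by rewrite (adj2 s sb sr ss) in bn.
Qed.


Lemma nodes_Node r (ch : seq (stree V)) z :
  (z \in nodes (Node r ch)) = (z == r) || has (fun c => z \in nodes c) ch.
Proof.
rewrite /= in_setU1; congr orb.
by elim: ch => [|c ch IH] /=; rewrite ?in_set0 // in_setU IH.
Qed.

Lemma height_Node r (ch : seq (stree V)) m :
  (forall c, List.In c ch -> height c <= m) -> height (Node r ch) <= m.+1.
Proof.
move=> h; rewrite /= ltnS; elim: ch h => //= c ch IH h.
by rewrite geq_max h ?IH //; auto.
Qed.

Lemma stc_Node A r (ch : seq (stree V)) : steiner_closed e (r |: A) ->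
  (forall c, List.In c ch -> stc_from e (r |: A) c) -> stc_from e A (Node r ch).
Proof.
move=> sc h; split => //; elim: ch h => //= c ch IH h.
by split; [apply: h; left | apply: IH => c0 hc0; apply: h; right].
Qed.

Lemma build_list (s : seq {set V}) (P : {set V} -> stree V -> Prop) :
  (forall K, K \in s -> exists t, nodes t = K /\ P K t) ->
  exists ch, map (@nodes V) ch = s /\ forall c, List.In c ch -> P (nodes c) c.
Proof.
elim: s => [|K s IH] h; first by exists [::].
have [t [nt pt]] := h K (mem_head _ _).
have [ch [mch pch]] := IH (fun K' K's => h K' (@mem_behead _ (K :: s) _ K's)).
exists (t :: ch); split; first by rewrite /= nt mch.
by move=> c /= [<-|/pch]; rewrite ?nt.
Qed.

Lemma tl_half k n : 0 < k -> k.*2 <= n -> (trunc_log 2 k).+1 <= trunc_log 2 n.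
Proof.
move=> k0 kn; apply: trunc_log_max => //; rewrite expnS mul2n.
by apply: leq_trans kn; rewrite leq_double; apply: trunc_logP.
Qed.

Definition hb n b := 2 * trunc_log 2 n + (if 1 < b then 2 else 1).

Lemma build n A x0 : #|cmp (~: A) x0| <= n -> good A -> x0 \notin A ->
  exists t, [/\ valid_stree e (cmp (~: A) x0) t, nodes t = cmp (~: A) x0,
    stc_from e A t & height t <= hb #|cmp (~: A) x0| #|bnd A (cmp (~: A) x0)|].
Proof.
elim: n A x0 => [|n IH] A x0 hn gA x0A.
  have x0c : x0 \in cmp (~: A) x0 by apply: comp_id; rewrite in_setC.
  by move: hn; rewrite leqn0 => /eqP/cards0_eq h0; rewrite h0 in_set0 in x0c.
set C := cmp (~: A) x0 in hn *.
have [r rC hr] := choose_root x0A (gA x0 x0A).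
rewrite -/C in rC hr.
have gA' : good (r |: A) := good_step gA rC (fun y yC => (hr y yC).1).
pose m := 2 * trunc_log 2 #|C| + (if 1 < #|bnd A C| then 1 else 0).
pose P K t := [/\ valid_stree e K t, stc_from e (r |: A) t & height t <= m].
have BL : forall K, K \in enum (components e (C :\ r)) -> exists t, nodes t = K /\ P K t.
  move=> K; rewrite mem_enum => /componentsP[y yC ->].
  have yA' : y \notin r |: A.
    move: yC; rewrite in_setD1 in_setU1 negb_or => /andP[-> /(subsetP (comp_sub _ _))].
    by rewrite in_setC.
  have eqK := comp_child rC yC; rewrite -/C in eqK.
  have small : #|cmp (~: (r |: A)) y| <= n.
    rewrite eqK -ltnS; apply: leq_trans hn.
    apply: leq_ltn_trans (subset_leq_card (comp_sub _ _)) _.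
    by rewrite (cardsD1 r C) rC.
  have [t [vt nt st ht]] := IH _ _ small gA' yA'.
  rewrite eqK in vt nt ht; exists t; split => //; split => //.
  have [b2 alt] := hr y yC.
  have K0 : 0 < #|cmp (C :\ r) y| by apply/card_gt0P; exists y; apply: comp_id.
  apply: leq_trans ht _; rewrite /hb /m.
  case: alt => [sm|[b1 two]].
    have := tl_half K0 sm; move: b2; clear; case: (1 < _); case: (1 < _); lia.
  have := leq_trunc_log 2 (subset_leq_card (subset_trans (comp_sub _ _) (subsetDl C [set r]))).
  rewrite ltnNge b1 two /= => /(_ y); lia.
have [ch [mch hch]] := build_list BL.
exists (Node r ch); split.
- apply: valid_Node => //; first by move=> c /hch [].
    by rewrite mch enum_uniq.
  by move=> X; rewrite mch mem_enum.
- apply/setP => z; rewrite nodes_Node.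
  have -> : has (fun c => z \in nodes c) ch = has (fun K => z \in K) (map (@nodes V) ch) by rewrite has_map.
  rewrite mch.
  apply/idP/idP.
    case/orP => [/eqP->//|/hasP[K]]; rewrite mem_enum => /componentsP[y _ ->].
    by move/(subsetP (comp_sub _ _)); rewrite in_setD1 => /andP[].
  move=> zC; case: eqVneq => //= zr; apply/hasP; exists (cmp (C :\ r) z).
    by rewrite mem_enum; apply: comp_components; rewrite in_setD1 zr.
  by apply: comp_id; rewrite in_setD1 zr.
- by apply: stc_Node; [apply: good_steiner | move=> c /hch []].
- apply: leq_trans (height_Node r (m := m) _) _; first by move=> c /hch [].
  by rewrite /m /hb; case: (1 < _); lia.
Qed.

End Basic.

Section Real.
Local Open Scope R_scope.
Lemma INR_exp2 k : INR (2 ^ k)%N = pow (INR 2) k.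
Proof. by elim: k => //= k IH; rewrite expnS mulnE mult_INR IH. Qed.

Lemma real_bound n k h : (0 < n)%N -> (2 ^ k <= n)%N -> (h <= 2 * k + 1)%N ->
  Rle (INR h) (Rplus (Rmult (INR 2) (log2R (INR n))) (INR 2)).
Proof.
move=> n0 kn hk.
have l2 : (0 < ln (INR 2)).
  rewrite -ln_1; apply: ln_increasing; first exact: Rlt_0_1.
  by apply: lt_1_INR.
have hpos : (0 < INR 2) by apply: (lt_0_INR 2); apply/ltP.
have npos : (0 < INR n) by apply: lt_0_INR; apply/ltP.
have kle : (INR k * ln (INR 2) <= ln (INR n)).
  rewrite -ln_pow //.
  have : (pow (INR 2) k <= INR n) by rewrite -INR_exp2; apply: le_INR; apply/leP.
  case/Rle_lt_or_eq_dec => [lt|->]; last exact: Rle_refl.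
  by apply: Rlt_le; apply: ln_increasing => //; apply: pow_lt.
have kle' : (INR k <= log2R (INR n)).
  rewrite /log2R /Rdiv; apply: (Rmult_le_reg_r (ln (INR 2))) => //.
  rewrite Rmult_assoc Rinv_l ?Rmult_1_r //; exact: Rgt_not_eq.
have hle : (INR h <= INR (2 * k + 1)) by apply: le_INR; apply/leP.
rewrite plus_INR mult_INR in hle.
have i2 : INR 2 = 2 by [].
have i1 : INR 1 = 1 by [].
rewrite i2 i1 in hle *; lra.
Qed.

End Real.

Unset Implicit Arguments.

Theorem mainTheorem7 (V : finType) (e : rel V) :
  0 < #|V| -> is_tree e ->
  exists P : stree V,
    [/\ valid_stree e [set: V] P,
        steiner_closed_stree e P &
        Rle (INR (height P)) (Rplus (Rmult (INR 2) (log2R (INR #|V|))) (INR 2))].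
Proof.
move=> n0 [[esym eirr] [call acy]].
have [x0 _] := card_gt0P n0.
have Call : Defs.comp e (~: set0) x0 = [set: V].
  apply/setP => y; rewrite !inE /=.
  rewrite (eq_connect (e' := e)) ?call // => u v.
  by rewrite /induced /= !inE.
have x0n : x0 \notin (set0 : {set V}) by rewrite inE.
have [t [vt _ st ht]] := @build V e esym eirr acy #|V| set0 x0 (max_card _) (good0 e) x0n.
rewrite Call in vt ht.
exists t; split => //.
have b0 : #|bnd e set0 [set: V]| = 0.
  by apply/eqP; rewrite cards_eq0; apply/eqP/setP => s; rewrite !inE.
move: ht; rewrite b0 /hb cardsT /= => ht.
apply: (real_bound n0 _ ht); exact: trunc_logP.
Qed.
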